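(* Let $0\le\eta_1<1/5$ and let $\sigma,\sigma_0:[n]\to[K]$ be assignments all of whose community sizes lie in $[(1-\eta_1)\frac nK,(1+\eta_1)\frac nK]$, with $d(\sigma,\sigma_0)=m$ for an integer $0<m<n$. Set $\eta=5\eta_1$. Then $$\alpha(\sigma;\sigma_0)\wedge\gamma(\sigma;\sigma_0)\ge\begin{cases}\frac{(1-\eta)nm}{K}-m^2, & m\le\frac{n}{2K},\\ \frac{2(1-\eta)nm}{9K}, & m>\frac{n}{2K}.\end{cases}$$
   Context: $d(\sigma_1,\sigma_2)=\min_\delta d_H(\sigma_1,\delta\circ\sigma_2)$ over permutations $\delta$ of $[K]$, $d_H$ the Hamming distance. $\alpha(\sigma;\sigma_0)=|\{(i,j):i<j,\ \sigma_0(i)=\sigma_0(j),\ \sigma(i)\ne\sigma(j)\}|$ and $\gamma(\sigma;\sigma_0)=|\{(i,j):i<j,\ \sigma_0(i)\ne\sigma_0(j),\ \sigma(i)=\sigma(j)\}|$. *)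

(* Defs.v *)
From HB Require Import structures.
From mathcomp Require Import all_boot all_order all_algebra all_fingroup.
Set Implicit Arguments. Unset Strict Implicit. Unset Printing Implicit Defensive.

Definition assignment (n K : nat) := {ffun 'I_n -> 'I_K}.

Definition dH (n K : nat) (s1 s2 : assignment n K) : nat :=
  #|[set i : 'I_n | s1 i != s2 i]|.

(* d(s1,s2) = min over permutations delta of [K] of dH(s1, delta o s2).
   Each dH is <= n, so n is a harmless neutral element for the min. *)
Definition dist (n K : nat) (s1 s2 : assignment n K) : nat :=
  \big[minn/n]_(delta : {perm 'I_K}) dH s1 [ffun i => delta (s2 i)].

Definition alpha (n K : nat) (s s0 : assignment n K) : nat :=
  #|[set p : 'I_n * 'I_n | (p.1 < p.2) && (s0 p.1 == s0 p.2) && (s p.1 != s p.2)]|.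

Definition gamma (n K : nat) (s s0 : assignment n K) : nat :=
  #|[set p : 'I_n * 'I_n | (p.1 < p.2) && (s0 p.1 != s0 p.2) && (s p.1 == s p.2)]|.

Definition csize (n K : nat) (s : assignment n K) (k : 'I_K) : nat :=
  #|[set i : 'I_n | s i == k]|.

Definition balanced (n K : nat) (e : rat) (s : assignment n K) : Prop :=
  forall k : 'I_K,
    ((1 - e) * n%:R / K%:R <= (csize s k)%:R)%R /\
    ((csize s k)%:R <= (1 + e) * n%:R / K%:R)%R.

(* Main.v *)
Require Import Defs.
From HB Require Import structures.
From mathcomp Require Import all_boot all_order all_algebra all_fingroup.
From mathcomp Require Import ring lra.
Import Order.TTheory GRing.Theory Num.Theory.
Local Open Scope ring_scope.

Lemma card_sumR (T : finType) (P : pred T) :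
  (#|[set x | P x]|%:R : rat) = \sum_x (P x)%:R.
Proof.
rewrite cardsE -sum1_card natr_sum big_mkcond /=.
by apply: eq_bigr => x _; rewrite unfold_in; case: (P x).
Qed.

Lemma card_sumA (T : finType) (A : {set T}) :
  (#|A|%:R : rat) = \sum_x (x \in A)%:R.
Proof.
rewrite -sum1_card natr_sum big_mkcond /=.
by apply: eq_bigr => x _; case: (x \in A).
Qed.

Section S.
Variables (n K : nat) (s s0 : assignment n K).

Definition N (k l : 'I_K) : rat := #|[set i | (s0 i == k) && (s i == l)]|%:R.

Lemma sum_class (F : 'I_K -> 'I_K -> rat) :
  \sum_i F (s0 i) (s i) = \sum_k \sum_l N k l * F k l.
Proof.
have -> : \sum_i F (s0 i) (s i) =
   \sum_i \sum_k \sum_l ((s0 i == k) && (s i == l))%:R * F k l.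
  apply: eq_bigr => i _.
  rewrite (bigD1 (s0 i)) //= [X in _ + X]big1 ?addr0; last first.
    move=> k hk; apply: big1 => l _; by rewrite eq_sym (negbTE hk) mul0r.
  rewrite (bigD1 (s i)) //= [X in _ + X]big1 ?addr0; last first.
    move=> l hl; by rewrite eq_refl eq_sym (negbTE hl) mul0r.
  by rewrite !eq_refl mul1r.
rewrite exchange_big; apply: eq_bigr => k _.
rewrite exchange_big; apply: eq_bigr => l _.
by rewrite /N card_sumR mulr_suml.
Qed.

Lemma sum_pred1 (G : 'I_K -> rat) j : \sum_l G l * (l == j)%:R = G j.
Proof.
rewrite (bigD1 j) //= [X in _ + X]big1 ?addr0 ?eq_refl ?mulr1 //.
by move=> l hl; rewrite (negbTE hl) mulr0.
Qed.

Lemma sum_pred1' (G : 'I_K -> rat) j : \sum_l G l * (j == l)%:R = G j.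
Proof. by rewrite -(sum_pred1 G j); apply: eq_bigr => l _; rewrite eq_sym. Qed.

Definition r k := \sum_l N k l.
Definition c l := \sum_k N k l.

Lemma csize0 k : (csize s0 k)%:R = r k.
Proof.
rewrite /csize card_sumR.
rewrite (sum_class (fun a b => (a == k)%:R)) /r.
under eq_bigr do rewrite -mulr_suml.
exact: (sum_pred1 (fun k' => \sum_l N k' l) k).
Qed.

Lemma csize1 l : (csize s l)%:R = c l.
Proof.
rewrite /csize card_sumR.
rewrite (sum_class (fun a b => (b == l)%:R)) /c exchange_big /=.
under eq_bigr do rewrite -mulr_suml.
exact: (sum_pred1 (fun l' => \sum_k N k l') l).
Qed.

Lemma natr_neq (T : eqType) (a b : T) : ((a != b)%:R : rat) = 1 - (a == b)%:R.
Proof. by case: (a == b); rewrite /= ?subr0 ?subrr. Qed.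

Lemma natr_and (a b : bool) : ((a && b)%:R : rat) = a%:R * b%:R.
Proof. by case: a; case: b; rewrite /= ?mulr1 ?mulr0 ?mul0r. Qed.

Lemma sum_neq k j : \sum_l N k l * (l != j)%:R = r k - N k j.
Proof.
under eq_bigr do rewrite natr_neq mulrBr mulr1.
by rewrite sumrB sum_pred1.
Qed.

Lemma sum_neq' k j : \sum_l N k l * (j != l)%:R = r k - N k j.
Proof. rewrite -sum_neq; apply: eq_bigr => l _; by rewrite eq_sym. Qed.

Lemma dH_sum (d : {perm 'I_K}) :
  (dH s [ffun i => d (s0 i)])%:R = \sum_k (r k - N k (d k)).
Proof.
rewrite /dH card_sumR.
under eq_bigr do rewrite ffunE.
rewrite (sum_class (fun a b => (b != d a)%:R)).
by apply: eq_bigr => k _; rewrite sum_neq.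
Qed.

Lemma inner_sum i :
  \sum_j ((s0 i == s0 j) && (s i != s j))%:R = r (s0 i) - N (s0 i) (s i).
Proof.
rewrite (sum_class (fun a b => ((s0 i == a) && (s i != b))%:R)).
under eq_bigr do under eq_bigr do rewrite natr_and mulrCA.
under eq_bigr do rewrite -mulr_sumr sum_neq' mulrC.
by rewrite sum_pred1'.
Qed.

Lemma alpha_sum :
  2 * (alpha s s0)%:R = \sum_k \sum_l N k l * (r k - N k l).
Proof.
pose P i j := (s0 i == s0 j) && (s i != s j).
have h1 : (alpha s s0)%:R = (\sum_(i : 'I_n) \sum_(j : 'I_n) ((i < j)%N && P i j)%:R :> rat).
  rewrite /alpha card_sumA pair_bigA /=.
  by apply: eq_bigr => p _; rewrite inE /P andbA.
have h2 : \sum_(i : 'I_n) \sum_(j : 'I_n) (P i j)%:R = 2 * (alpha s s0)%:R :> rat.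
  rewrite h1 mulr2n mulrDl mul1r.
  have E : \sum_(i : 'I_n) \sum_(j : 'I_n) ((i < j)%N && P i j)%:R = \sum_(i : 'I_n) \sum_(j : 'I_n) ((j < i)%N && P i j)%:R :> rat.
    rewrite exchange_big; apply: eq_bigr => i _; apply: eq_bigr => j _.
    by rewrite /P eq_sym [s j == _]eq_sym.
  rewrite {2}E -big_split /=; apply: eq_bigr => i _.
  rewrite -big_split /=; apply: eq_bigr => j _.
  case: (ltngtP i j) => h.
  - by rewrite /= addr0.
  - by rewrite /= add0r.
  - have -> : i = j by apply: val_inj.
    by rewrite /P !eqxx /= addr0.
rewrite -h2.
under eq_bigr do rewrite inner_sum.
by rewrite (sum_class (fun a b => r a - N a b)).
Qed.

Lemma N_ge0 k l : 0 <= N k l.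
Proof. exact: ler0n. Qed.

Lemma swap_opt (d : {perm 'I_K}) :
  (forall d' : {perm 'I_K}, (dH s [ffun i => d (s0 i)] <= dH s [ffun i => d' (s0 i)])%N) ->
  forall k l, l != d k -> N k l <= N k (d k) + N ((d^-1)%g l) l.
Proof.
move=> opt k l hl.
set k' := (d^-1)%g l.
have dk' : d k' = l by rewrite /k' permKV.
have hk' : k' != k by apply: contra hl => /eqP <-; rewrite dk'.
pose d' := (d * tperm (d k) l)%g.
have d'E j : d' j = tperm (d k) l (d j) by rewrite /d' permM.
have := opt d'; rewrite -(ler_nat rat) !dH_sum !sumrB lerD2l lerN2.
have E (f : 'I_K -> 'I_K) : \sum_i N i (f i) =
   N k (f k) + N k' (f k') + \sum_(i < K | (i != k) && (i != k')) N i (f i).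
  by rewrite (bigD1 k) //= (bigD1 k') //= addrA.
rewrite !E !d'E tpermL dk' tpermR.
have -> : \sum_(i < K | (i != k) && (i != k')) N i (d' i) =
          \sum_(i < K | (i != k) && (i != k')) N i (d i).
  apply: eq_bigr => j /andP [hj1 hj2]; rewrite d'E tpermD //.
    by rewrite (inj_eq perm_inj) eq_sym.
  by rewrite -dk' (inj_eq perm_inj) eq_sym.
have := N_ge0 k' (d k).
lra.
Qed.

Lemma col_disj k k' l : k != k' -> N k l + N k' l <= c l.
Proof.
move=> hk; rewrite /c (bigD1 k) //= (bigD1 k') 1?eq_sym //=.
rewrite addrA lerDl; apply: sumr_ge0 => j _; exact: N_ge0.
Qed.

Lemma row_split k j : r k = N k j + \sum_(l | l != j) N k l.
Proof. by rewrite /r (bigD1 j). Qed.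

Lemma core (d : {perm 'I_K}) (m : nat) (R C : rat) :
  (forall k, R <= r k) -> (forall l, c l <= C) ->
  dH s [ffun i => d (s0 i)] = m ->
  (forall d' : {perm 'I_K}, (dH s [ffun i => d (s0 i)] <= dH s [ffun i => d' (s0 i)])%N) ->
  (R - m%:R) * m%:R <= (alpha s s0)%:R /\ m%:R * (2 * R - C) / 4%:R <= (alpha s s0)%:R.
Proof.
move=> hR hC hd opt.
pose x k := N k (d k).
pose e k := r k - x k.
have hm : m%:R = \sum_k e k by rewrite -hd dH_sum.
have he k : e k = \sum_(l | l != d k) N k l.
  by rewrite /e /x (row_split k (d k)) addrC addKr.
have e0 k : 0 <= e k by rewrite he; apply: sumr_ge0 => l _; exact: N_ge0.
have x0 k : 0 <= x k by exact: N_ge0.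
have em k : e k <= m%:R.
  rewrite hm (bigD1 k) //= lerDl; apply: sumr_ge0 => j _; exact: e0.
have gen k h : (forall l, l != d k -> h <= r k - N k l) ->
    x k * e k + h * e k <= \sum_l N k l * (r k - N k l).
  move=> hh; rewrite (bigD1 (d k)) //= -/(x k) -/(e k) lerD2l he mulr_sumr.
  apply: ler_sum => l hl; rewrite mulrC; apply: ler_wpM2l; first exact: N_ge0.
  exact: hh.
have A2 := alpha_sum.
split.
- have b1 k : 2 * (R - m%:R) * e k <= \sum_l N k l * (r k - N k l).
    apply: le_trans (gen k (x k) _).
      have : R - m%:R <= x k by have := hR k; have := em k; rewrite /e; lra.
      move=> h; have := e0 k; nra.
    move=> l hl; have := row_split k (d k); rewrite (bigD1 l hl) /= -/(x k).
    have : 0 <= \sum_(i < K | (i != d k) && (i != l)) N k i.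
      by apply: sumr_ge0 => j _; exact: N_ge0.
    lra.
  have : 2 * (R - m%:R) * m%:R <= 2 * (alpha s s0)%:R.
    by rewrite A2 [X in _ * X <= _]hm mulr_sumr; apply: ler_sum => k _; exact: b1.
  lra.
- have b2 k : e k * (2 * R - C) / 2 <= \sum_l N k l * (r k - N k l).
    apply: le_trans (gen k ((2 * R - x k - C) / 2) _).
      have := e0 k; have := x0 k; nra.
    move=> l hl.
    set k' := (d^-1)%g l.
    have hk' : k != k'.
      apply: contra hl => /eqP ->; by rewrite /k' permKV.
    have := @swap_opt d opt k l hl; have := @col_disj k k' l hk'; have := hC l; have := hR k.
    rewrite -/(x k) -/k'; lra.
  have : m%:R * (2 * R - C) / 2 <= 2 * (alpha s s0)%:R.
    rewrite A2 hm !mulr_suml; apply: ler_sum => k _; exact: b2.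
  lra.
Qed.

End S.
Lemma dist_le n K (s s0 : assignment n K) (d' : {perm 'I_K}) :
  (dist s s0 <= dH s [ffun i => d' (s0 i)])%N.
Proof.
rewrite /dist; move: (mem_index_enum d').
elim: (index_enum _) => [|a l IH] //=.
rewrite in_cons big_cons /=; case/orP => [/eqP <-|h].
  exact: geq_minl.
by apply: leq_trans (geq_minr _ _) (IH h).
Qed.

Lemma dist_ex n K (s s0 : assignment n K) :
  dist s s0 = n \/ exists d : {perm 'I_K}, dist s s0 = dH s [ffun i => d (s0 i)].
Proof.
rewrite /dist; apply: (big_ind (fun x => x = n \/ exists d : {perm 'I_K}, x = dH s [ffun i => d (s0 i)])).
- by left.
- move=> x y hx hy; rewrite /minn; case: ifP => _; [exact: hx | exact: hy].
- by move=> d _; right; exists d.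
Qed.

Lemma dH_inv n K (s s0 : assignment n K) (d : {perm 'I_K}) :
  dH s0 [ffun i => d (s i)] = dH s [ffun i => (d^-1)%g (s0 i)].
Proof.
rewrite /dH; apply: eq_card => i; rewrite !inE !ffunE.
by rewrite [s i == _]eq_sym (can2_eq (permKV d) (permK d)) eq_sym.
Qed.

Lemma gamma_alpha n K (s s0 : assignment n K) : gamma s s0 = alpha s0 s.
Proof.
rewrite /gamma /alpha; apply: eq_card => p; rewrite !inE.
by case: (_ < _)%N; case: (s0 _ == _); case: (s _ == _).
Qed.

Lemma min_helper (X : rat) a b : X <= a%:R -> X <= b%:R -> X <= (minn a b)%:R.
Proof. by rewrite /minn; case: ifP. Qed.

Theorem lemma4 (n K m : nat) (eta1 : rat) (s s0 : assignment n K) :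
  0 <= eta1 -> eta1 < 1 / 5%:R ->
  balanced eta1 s -> balanced eta1 s0 ->
  dist s s0 = m -> (0 < m)%N -> (m < n)%N ->
  let eta := 5%:R * eta1 in
  (if (m%:R <= n%:R / (2 * K)%:R :> rat)
   then (1 - eta) * n%:R * m%:R / K%:R - (m ^ 2)%:R
   else 2%:R * (1 - eta) * n%:R * m%:R / (9 * K)%:R)
  <= (minn (alpha s s0) (gamma s s0))%:R :> rat.
Proof.
move=> h0 h5 bs bs0 hdist m0 mn; cbv zeta.
have n0 : (0 < n)%N by apply: leq_ltn_trans mn.
pose i0 : 'I_n := Ordinal n0.
have K0 : (0 < K)%N := leq_ltn_trans (leq0n _) (ltn_ord (s i0)).
have [hn | [d hd]] := dist_ex _ _ s s0.
  by move: mn; rewrite -hdist hn ltnn.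
have hdm : dH s [ffun i => d (s0 i)] = m.
  rewrite -hd; exact: hdist.
have opt : forall d' : {perm 'I_K}, (dH s [ffun i => d (s0 i)] <= dH s [ffun i => d' (s0 i)])%N.
  by move=> d'; rewrite -hd; apply: (dist_le _ _ s s0).
pose R := (1 - eta1) * n%:R / K%:R.
pose C := (1 + eta1) * n%:R / K%:R.
have hR : forall k, R <= r n K s s0 k.
  move=> k; rewrite -csize0; exact: (bs0 k).1.
have hC : forall l, c n K s s0 l <= C.
  move=> l; rewrite -(csize1 n K s s0 l); exact: (bs l).2.
have [a1 a2] := core _ _ s s0 d m R C hR hC hdm opt.
have hdm' : dH s0 [ffun i => (d^-1)%g (s i)] = m.
  rewrite dH_inv invgK; exact: hdm.
have opt' : forall d' : {perm 'I_K}, (dH s0 [ffun i => (d^-1)%g (s i)] <= dH s0 [ffun i => d' (s i)])%N.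
  move=> d'; rewrite (dH_inv _ _ s s0 (d^-1)%g) (dH_inv _ _ s s0 d') invgK; exact: opt.
have hR' : forall k, R <= r n K s0 s k.
  move=> k; rewrite -(csize0 n K s0 s k); exact: (bs k).1.
have hC' : forall l, c n K s0 s l <= C.
  move=> l; rewrite -(csize1 n K s0 s l); exact: (bs0 l).2.
have [g1 g2] := core _ _ s0 s (d^-1)%g m R C hR' hC' hdm' opt'.
rewrite -gamma_alpha in g1 g2.
set M := m%:R in a1 a2 g1 g2 *.
have Kne : K%:R != 0 :> rat by rewrite pnatr_eq0 -lt0n.
have u0 : 0 <= n%:R / K%:R * M :> rat.
  by apply: mulr_ge0; [apply: divr_ge0 | ]; apply: ler0n.
have v0 : 0 <= eta1 * (n%:R / K%:R * M) by apply: mulr_ge0.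
case: ifP => _; apply: min_helper.
- have E : (R - M) * M - ((1 - 5%:R * eta1) * n%:R * M / K%:R - (m ^ 2)%:R)
      = 4%:R * (eta1 * (n%:R / K%:R * M)).
    rewrite /R natrX /M; field; exact: Kne.
  lra.
- have E : (R - M) * M - ((1 - 5%:R * eta1) * n%:R * M / K%:R - (m ^ 2)%:R)
      = 4%:R * (eta1 * (n%:R / K%:R * M)).
    rewrite /R natrX /M; field; exact: Kne.
  lra.
- have E : M * (2 * R - C) / 4%:R - 2%:R * (1 - 5%:R * eta1) * n%:R * M / (9 * K)%:R
      = (n%:R / K%:R * M) / 36%:R + 13%:R / 36%:R * (eta1 * (n%:R / K%:R * M)).
    rewrite /R /C natrM; field; exact: Kne.
  lra.
- have E : M * (2 * R - C) / 4%:R - 2%:R * (1 - 5%:R * eta1) * n%:R * M / (9 * K)%:R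
      = (n%:R / K%:R * M) / 36%:R + 13%:R / 36%:R * (eta1 * (n%:R / K%:R * M)).
    rewrite /R /C natrM; field; exact: Kne.
  lra.
Qed.
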